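(* Let $K\subset\mathbb{R}^d$ be a convex body (not necessarily centrally symmetric) with parameter of asymmetry $\sigma$. Let $\mathcal{K}=\{o_i+\tau_iK : i=1,\dots,n\}$ with $o_i\in\mathbb{R}^d$ and $\tau_1,\dots,\tau_n>0$ be a non-separable family of positive homothetic copies of $K$. Then there is a translate of $\frac{\sigma+1}{2}\left(\sum_{i=1}^n\tau_i\right)K$ that covers $\bigcup\mathcal{K}$.
   Context: A convex body is a compact convex set with nonempty interior. A family $\mathcal{K}$ of convex bodies in $\mathbb{R}^d$ is called non-separable if every hyperplane $H$ that intersects $\operatorname{conv}\bigcup\mathcal{K}$ intersects some member of $\mathcal{K}$. For a convex body $K$, the parameter of asymmetry is $\sigma=\min_{q\in\operatorname{int}K}\min\{\mu>0 : (K-q)\subset-\mu(K-q)\}$. Equivalently, it is $\min_{q\in\operatorname{int}K}\min\{\mu>0:(K-q)^\circ\subset-\mu(K-q)^\circ\}$, where $L^\circ=\{p:\langle p,x\rangle\le1\ \forall x\in L\}$ denotes the polar body. *)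

(* Defs.v *)
From Stdlib Require Import Reals Lra.
From Stdlib Require Fin List.
Open Scope R_scope.

Definition point (d : nat) := Fin.t d -> R.

Fixpoint sumFin (d : nat) : (Fin.t d -> R) -> R :=
  match d return (Fin.t d -> R) -> R with
  | O => fun _ => 0
  | S m => fun f => f Fin.F1 + sumFin m (fun i => f (Fin.FS i))
  end.

Definition vadd {d} (x y : point d) : point d := fun i => x i + y i.
Definition vsub {d} (x y : point d) : point d := fun i => x i - y i.
Definition vscale {d} (c : R) (x : point d) : point d := fun i => c * x i.
Definition dot {d} (x y : point d) : R := sumFin d (fun i => x i * y i).
Definition vnorm {d} (x : point d) : R := sqrt (dot x x).

Definition pset (d : nat) := point d -> Prop.

Definition ball {d} (c : point d) (r : R) : pset d :=
  fun x => vnorm (vsub x c) < r.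

Definition is_open {d} (U : pset d) : Prop :=
  forall x, U x -> exists r, 0 < r /\ forall y, ball x r y -> U y.

Definition compact {d} (K : pset d) : Prop :=
  forall (I : Type) (U : I -> pset d),
    (forall i, is_open (U i)) ->
    (forall x, K x -> exists i, U i x) ->
    exists l : list I, forall x, K x -> exists i, List.In i l /\ U i x.

Definition convex {d} (K : pset d) : Prop :=
  forall x y t, K x -> K y -> 0 <= t <= 1 ->
    K (vadd (vscale (1 - t) x) (vscale t y)).

Definition interior {d} (K : pset d) : pset d :=
  fun x => exists r, 0 < r /\ forall y, ball x r y -> K y.

Definition convex_body {d} (K : pset d) : Prop :=
  compact K /\ convex K /\ exists x, interior K x.

Definition conv {d} (S : pset d) : pset d :=
  fun x => forall C : pset d, convex C -> (forall y, S y -> C y) -> C x.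

Definition asym_incl {d} (K : pset d) (q : point d) (mu : R) : Prop :=
  forall x, K x -> exists y, K y /\ vsub x q = vscale (- mu) (vsub y q).

(* sigma is the parameter of asymmetry of K:
   min over q in int K of min { mu > 0 : (K - q) ⊂ -mu (K - q) } *)
Definition asymmetry {d} (K : pset d) (sigma : R) : Prop :=
  0 < sigma /\
  (exists q, interior K q /\ asym_incl K q sigma) /\
  (forall q mu, interior K q -> 0 < mu -> asym_incl K q mu -> sigma <= mu).

Definition homot {d} (o : point d) (tau : R) (K : pset d) : pset d :=
  fun x => exists y, K y /\ x = vadd o (vscale tau y).

(* union of the family { o_i + tau_i K : i < n } (indices 0..n-1) *)
Definition fam_union {d} (n : nat) (o : nat -> point d) (tau : nat -> R)
  (K : pset d) : pset d :=
  fun x => exists i, (i < n)%nat /\ homot (o i) (tau i) K x.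

(* hyperplane { x | <a, x> = c }, a <> 0 *)
Definition nonzero {d} (a : point d) : Prop := exists i, a i <> 0.

Definition non_separable {d} (n : nat) (o : nat -> point d) (tau : nat -> R)
  (K : pset d) : Prop :=
  forall (a : point d) (c : R), nonzero a ->
    (exists x, conv (fam_union n o tau K) x /\ dot a x = c) ->
    exists i x, (i < n)%nat /\ homot (o i) (tau i) K x /\ dot a x = c.

Fixpoint sumR (n : nat) (f : nat -> R) : R :=
  match n with O => 0 | S m => sumR m f + f m end.

(* Main.v *)
Require Import Defs.
From Stdlib Require Import Reals Lra Psatz FunctionalExtensionality Classical.
From Stdlib Require Fin List.
Open Scope R_scope.

Lemma sumFin_ext : forall d (f g : Fin.t d -> R), (forall i, f i = g i) -> sumFin d f = sumFin d g.
Proof. induction d; simpl; intros f g H; auto. rewrite H. f_equal. apply IHd; auto. Qed.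

Lemma sumFin_plus : forall d (f g : Fin.t d -> R), sumFin d (fun i => f i + g i) = sumFin d f + sumFin d g.
Proof. induction d; simpl; intros f g; [lra|]. rewrite IHd. ring. Qed.

Lemma sumFin_scale : forall d c (f : Fin.t d -> R), sumFin d (fun i => c * f i) = c * sumFin d f.
Proof. induction d; simpl; intros c f; [lra|]. rewrite IHd. ring. Qed.

Lemma sumFin_le : forall d (f g : Fin.t d -> R), (forall i, f i <= g i) -> sumFin d f <= sumFin d g.
Proof. induction d; simpl; intros f g H; [lra|]. specialize (IHd (fun i => f (Fin.FS i)) (fun i => g (Fin.FS i))).
  assert (sumFin d (fun i => f (Fin.FS i)) <= sumFin d (fun i => g (Fin.FS i))) by (apply IHd; auto).
  specialize (H Fin.F1). lra. Qed.

Lemma sumFin_zero : forall d, sumFin d (fun _ => 0) = 0.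
Proof. induction d; simpl; auto. rewrite IHd; ring. Qed.

Lemma sumFin_sq_nonneg : forall d (a : Fin.t d -> R), 0 <= sumFin d (fun i => a i * a i).
Proof. intros. rewrite <- (sumFin_zero d). apply sumFin_le. intros; nra. Qed.

Lemma sumFin_sq_pos : forall d (a : Fin.t d -> R), (exists i, a i <> 0) -> 0 < sumFin d (fun i => a i * a i).
Proof. induction d; intros a [i Hi].
  - inversion i.
  - simpl. revert Hi. pattern i. apply Fin.caseS'.
    + intros. pose proof (sumFin_sq_nonneg d (fun j => a (Fin.FS j))). simpl in H. nra.
    + intros p Hp. assert (0 < sumFin d (fun j => a (Fin.FS j) * a (Fin.FS j))).
      { apply (IHd (fun j => a (Fin.FS j))). exists p; auto. } nra.
Qed.

Lemma sumR_ext : forall n f g, (forall i, (i < n)%nat -> f i = g i) -> sumR n f = sumR n g.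
Proof. induction n; simpl; intros f g H; auto. rewrite IHn with (g := g); [rewrite H; auto|]. intros; apply H; lia. Qed.

Lemma sumR_plus : forall n f g, sumR n (fun i => f i + g i) = sumR n f + sumR n g.
Proof. induction n; simpl; intros; [lra|]. rewrite IHn; ring. Qed.

Lemma sumR_scale : forall n c f, sumR n (fun i => c * f i) = c * sumR n f.
Proof. induction n; simpl; intros; [lra|]. rewrite IHn; ring. Qed.

Lemma sumR_le : forall n f g, (forall i, (i < n)%nat -> f i <= g i) -> sumR n f <= sumR n g.
Proof. induction n; simpl; intros f g H; [lra|].
  assert (sumR n f <= sumR n g) by (apply IHn; intros; apply H; lia).
  assert (f n <= g n) by (apply H; lia). lra. Qed.

Lemma sumR_zero : forall n, sumR n (fun _ => 0) = 0.
Proof. induction n; simpl; auto. rewrite IHn; ring. Qed.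

Lemma sumR_nonneg : forall n f, (forall i, (i < n)%nat -> 0 <= f i) -> 0 <= sumR n f.
Proof. intros. rewrite <- (sumR_zero n). apply sumR_le. auto. Qed.

Lemma sumR_swap : forall n m (f : nat -> nat -> R),
  sumR n (fun i => sumR m (fun k => f i k)) = sumR m (fun k => sumR n (fun i => f i k)).
Proof. induction n; simpl; intros.
  - rewrite sumR_zero; auto.
  - rewrite IHn. rewrite <- sumR_plus. auto. Qed.

Lemma sumFin_sumR : forall d n (f : nat -> Fin.t d -> R),
  sumFin d (fun m => sumR n (fun i => f i m)) = sumR n (fun i => sumFin d (f i)).
Proof. induction n; simpl; intros.
  - apply sumFin_zero.
  - rewrite sumFin_plus, IHn. auto. Qed.

Lemma sumR_delta : forall n i (f : nat -> R), (i < n)%nat ->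
  sumR n (fun k => if Nat.eq_dec i k then f k else 0) = f i.
Proof. induction n; simpl; intros i f Hi; [lia|].
  destruct (Nat.eq_dec i n).
  - subst. rewrite (sumR_ext n _ (fun _ => 0)). rewrite sumR_zero; ring.
    intros k Hk. destruct (Nat.eq_dec n k); [lia|auto].
  - rewrite IHn; [ring|lia]. Qed.

Lemma sumR_ge_term : forall n f i, (forall k, (k < n)%nat -> 0 <= f k) -> (i < n)%nat -> f i <= sumR n f.
Proof. induction n; simpl; intros f i H Hi; [lia|].
  assert (0 <= sumR n f) by (apply sumR_nonneg; intros; apply H; lia).
  destruct (Nat.eq_dec i n). subst; lra.
  assert (f i <= sumR n f) by (apply IHn; auto; lia). assert (0 <= f n) by (apply H; lia). lra. Qed.

Lemma eps_le : forall x y, (forall e, 0 < e -> x <= y + e) -> x <= y.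
Proof. intros. destruct (Rle_lt_dec x y); auto. specialize (H ((x-y)/2)). lra. Qed.
Fixpoint cnt (n : nat) (b : nat -> bool) : nat :=
  match n with O => O | S m => (cnt m b + (if b m then 1 else 0))%nat end.

Definition rem (b : nat -> bool) k0 := fun k => andb (b k) (negb (Nat.eqb k k0)).

Lemma cnt_rem : forall n b k0, b k0 = true ->
  cnt n b = (cnt n (rem b k0) + (if Nat.ltb k0 n then 1 else 0))%nat.
Proof. induction n; simpl; intros b k0 Hb; auto.
  rewrite (IHn b k0 Hb). replace (rem b k0 n) with (andb (b n) (negb (Nat.eqb n k0))) by reflexivity.
  destruct (Nat.eq_dec n k0).
  - subst. rewrite Hb, Nat.eqb_refl. simpl.
    assert (Nat.ltb k0 k0 = false) as E by (apply Nat.ltb_ge; lia).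
    assert (Nat.ltb k0 (S k0) = true) as E2 by (apply Nat.ltb_lt; lia). rewrite E, E2. lia.
  - assert (Nat.eqb n k0 = false) as E by (apply Nat.eqb_neq; auto). rewrite E.
    rewrite Bool.andb_true_r.
    destruct (Nat.ltb_spec k0 n); destruct (Nat.ltb_spec k0 (S n)); lia.
Qed.

Lemma sum_rem : forall n (b : nat -> bool) (w : nat -> R) k0, b k0 = true -> (k0 < n)%nat ->
  sumR n (fun k => if b k then w k else 0) = sumR n (fun k => if rem b k0 k then w k else 0) + w k0.
Proof. induction n; simpl; intros b w k0 Hb Hk; [lia|].
  replace (rem b k0 n) with (andb (b n) (negb (Nat.eqb n k0))) by reflexivity. destruct (Nat.eq_dec n k0).
  - subst. rewrite Hb, Nat.eqb_refl. simpl.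
    rewrite (sumR_ext k0 (fun k => if rem b k0 k then w k else 0) (fun k => if b k then w k else 0)). ring.
    intros i Hi. unfold rem. assert (Nat.eqb i k0 = false) as E by (apply Nat.eqb_neq; lia). rewrite E, Bool.andb_true_r. auto.
  - assert (Nat.eqb n k0 = false) as E by (apply Nat.eqb_neq; auto). rewrite E, Bool.andb_true_r.
    rewrite (IHn b w k0 Hb); [ring|lia].
Qed.

Lemma cover : forall N n (l r : nat -> R) (b : nat -> bool), (cnt n b <= N)%nat ->
  (forall k, (k<n)%nat -> b k = true -> l k <= r k) ->
  forall A B, (forall c, A <= c <= B -> exists k, (k<n)%nat /\ b k = true /\ l k <= c <= r k) ->
  B - A <= sumR n (fun k => if b k then r k - l k else 0).
Proof.
  induction N; intros n l r b Hc Hlr A B Hcov;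
  (assert (Hnn : forall b', (forall k, (k<n)%nat -> b' k = true -> l k <= r k) -> 0 <= sumR n (fun k => if b' k then r k - l k else 0)) by
    (intros b' Hb'; apply sumR_nonneg; intros k Hk; destruct (b' k) eqn:E; [specialize (Hb' k Hk E); lra| lra]));
  (destruct (Rlt_le_dec B A) as [HBA|HAB]; [specialize (Hnn b Hlr); lra|]);
  destruct (Hcov B) as [k0 [Hk0 [Hb0 [Hl0 Hr0]]]]; try lra;
  pose proof (cnt_rem n b k0 Hb0) as Ec;
  assert (Nat.ltb k0 n = true) as Elt by (apply Nat.ltb_lt; auto); rewrite Elt in Ec.
  - lia.
  - rewrite (sum_rem n b (fun k => r k - l k) k0 Hb0 Hk0).
    assert (Hr : forall k, (k<n)%nat -> rem b k0 k = true -> l k <= r k).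
    { intros k Hk E. unfold rem in E. apply Bool.andb_true_iff in E. apply Hlr; tauto. }
    destruct (Rle_lt_dec (l k0) A).
    + specialize (Hnn _ Hr). lra.
    + assert (l k0 - A <= sumR n (fun k => if rem b k0 k then r k - l k else 0)).
      { apply eps_le. intros e He.
        assert (l k0 - e - A <= sumR n (fun k => if rem b k0 k then r k - l k else 0)); [|lra].
        apply (IHN n l r (rem b k0)); [lia|exact Hr|].
        intros c Hcc. destruct (Hcov c) as [k [Hk [Hbk Hlk]]]; [lra|].
        exists k. split; auto. split; [|lra]. unfold rem. rewrite Hbk. simpl.
        destruct (Nat.eqb k k0) eqn:E; auto. apply Nat.eqb_eq in E. subst. lra. }
      lra.
Qed.

Lemma argmax : forall n (f : nat -> R), (0 < n)%nat -> exists j, (j < n)%nat /\ forall i, (i < n)%nat -> f i <= f j.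
Proof. induction n; intros f Hn; [lia|]. destruct n.
  - exists 0%nat. split; [lia|]. intros i Hi. replace i with 0%nat by lia. lra.
  - destruct (IHn f) as [j [Hj Hm]]; [lia|].
    destruct (Rle_lt_dec (f j) (f (S n))).
    + exists (S n). split; [lia|]. intros i Hi. destruct (Nat.eq_dec i (S n)). subst; lra. specialize (Hm i ltac:(lia)). lra.
    + exists j. split; [lia|]. intros i Hi. destruct (Nat.eq_dec i (S n)). subst; lra. apply Hm; lia.
Qed.

Definition bl (x y : R) : bool := if Rlt_dec x y then true else false.

Lemma oneD n (al tau : nat -> R) H G sigma :
  (forall i, (i<n)%nat -> 0 < tau i) -> 0 <= H -> 0 <= G -> 0 < sigma -> H <= sigma*G -> G <= sigma*H ->
  (forall c, (exists i, (i<n)%nat /\ al i - tau i * G <= c) -> (exists k, (k<n)%nat /\ c <= al k + tau k * H) ->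
      exists m, (m<n)%nat /\ al m - tau m * G <= c <= al m + tau m * H) ->
  forall j, (j<n)%nat -> sumR n tau * (al j + tau j * H) - sumR n (fun i => tau i * al i)
     <= (sigma+1)/2 * (sumR n tau * sumR n tau) * H.
Proof.
  intros Htau HH HG Hs H1 H2 Hconn j Hj.
  set (r := fun i => al i + tau i * H). set (l := fun i => al i - tau i * G).
  destruct (argmax n r) as [jm [Hjm Hmax]]; [lia|].
  assert (HL : forall i, (i<n)%nat -> r jm - r i <= sumR n (fun k => if bl (r i) (r k) then r k - l k else 0)).
  { intros i Hi.
    assert (Hnn : 0 <= sumR n (fun k => if bl (r i) (r k) then r k - l k else 0)).
    { apply sumR_nonneg. intros k Hk. unfold r, l. specialize (Htau k Hk). destruct (bl _ _); nra. }
    apply eps_le. intros e He. destruct (Rlt_le_dec (r jm) (r i + e)). lra.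
    assert (r jm - (r i + e) <= sumR n (fun k => if bl (r i) (r k) then r k - l k else 0)); [|lra].
    apply (cover (cnt n (fun k => bl (r i) (r k)))); auto.
    - intros k Hk _. unfold r, l. specialize (Htau k Hk). nra.
    - intros c Hc. destruct (Hconn c) as [m [Hm Hc2]].
      + exists i. split; auto. unfold r in Hc. specialize (Htau i Hi). nra.
      + exists jm. split; auto. unfold r in Hc. lra.
      + exists m. split; auto. split; [|unfold l, r; lra]. unfold bl.
        destruct (Rlt_dec (r i) (r m)); auto. unfold r in *. lra. }
  set (Lam := sumR n tau).
  set (S := sumR n (fun i => sumR n (fun k => if bl (r i) (r k) then tau i * tau k else 0))).
  set (Q := sumR n (fun i => tau i * tau i)).
  assert (E1 : sumR n tau * (al j + tau j * H) - sumR n (fun i => tau i * al i) <=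
               sumR n (fun i => tau i * (r jm - r i)) + H * Q).
  { assert (r j <= r jm) by (apply Hmax; auto).
    assert (sumR n tau * r j <= sumR n tau * r jm).
    { apply Rmult_le_compat_l; auto. apply sumR_nonneg; intros; specialize (Htau i H3); lra. }
    assert (sumR n (fun i => tau i * (r jm - r i)) =
       sumR n (fun i => r jm * tau i + (-1) * (tau i * al i) + (-H) * (tau i * tau i))).
    { apply sumR_ext. intros. unfold r. ring. }
    rewrite !sumR_plus, !sumR_scale in H4. unfold Q. unfold r in *. nra. }
  assert (E2 : sumR n (fun i => tau i * (r jm - r i)) <= (H + G) * S).
  { unfold S. rewrite <- sumR_scale. apply sumR_le. intros i Hi.
    eapply Rle_trans. apply Rmult_le_compat_l; [specialize (Htau i Hi); lra|apply HL; auto].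
    apply Req_le. rewrite <- !sumR_scale. apply sumR_ext. intros k Hk. destruct (bl _ _); unfold r, l; ring. }
  assert (E3 : 2 * S + Q <= Lam * Lam).
  { assert (HL2 : Lam * Lam = sumR n (fun i => sumR n (fun k => tau i * tau k))).
    { unfold Lam. rewrite <- sumR_scale. apply sumR_ext. intros. rewrite sumR_scale. ring. }
    assert (HQ2 : Q = sumR n (fun i => sumR n (fun k => if Nat.eq_dec i k then tau i * tau k else 0))).
    { unfold Q. apply sumR_ext. intros i Hi. rewrite (sumR_delta n i (fun k => tau i * tau k)); auto. }
    assert (HS2 : S = sumR n (fun i => sumR n (fun k => if bl (r k) (r i) then tau k * tau i else 0))).
    { unfold S. rewrite (sumR_swap n n (fun i k => if bl (r i) (r k) then tau i * tau k else 0)). reflexivity. }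
    assert (Hbig : sumR n (fun i => sumR n (fun k =>
       (if bl (r i) (r k) then tau i * tau k else 0) + (if bl (r k) (r i) then tau k * tau i else 0)
       + (if Nat.eq_dec i k then tau i * tau k else 0))) =
       S + sumR n (fun i => sumR n (fun k => if bl (r k) (r i) then tau k * tau i else 0))
       + sumR n (fun i => sumR n (fun k => if Nat.eq_dec i k then tau i * tau k else 0))).
    { unfold S. rewrite <- !sumR_plus. apply sumR_ext. intros. rewrite <- !sumR_plus. reflexivity. }
    rewrite <- HS2, <- HQ2 in Hbig.
    replace (2 * S + Q) with (S + S + Q) by ring. rewrite <- Hbig, HL2.
    apply sumR_le. intros i Hi. apply sumR_le. intros k Hk.
    pose proof (Htau i Hi). pose proof (Htau k Hk). unfold bl.
    destruct (Nat.eq_dec i k).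
    - subst. destruct (Rlt_dec (r k) (r k)); [lra|]. lra.
    - destruct (Rlt_dec (r i) (r k)); destruct (Rlt_dec (r k) (r i)); try lra; nra. }
  assert (HS : 0 <= S).
  { unfold S. apply sumR_nonneg. intros i Hi. apply sumR_nonneg. intros k Hk.
    pose proof (Htau i Hi). pose proof (Htau k Hk). destruct (bl _ _); nra. }
  assert (HQ : 0 <= Q). { unfold Q. apply sumR_nonneg. intros. nra. }
  unfold Lam in *. clearbody r l S Q. clear Lam. destruct (Req_dec H 0).
  - subst. assert (G = 0) by lra. subst. lra.
  - assert (1 <= sigma) by nra.
    assert ((H+G)*S <= (1+sigma)*H*S) by nra.
    assert (0 <= (sigma-1)*(H*Q)) by (apply Rmult_le_pos; nra).
    assert ((sigma+1)/2*H*(2*S+Q) <= (sigma+1)/2*H*(sumR n tau * sumR n tau)) by (apply Rmult_le_compat_l; nra).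
    lra.
Qed.

Lemma sumFin_minus : forall d (f g : Fin.t d -> R), sumFin d (fun i => f i - g i) = sumFin d f - sumFin d g.
Proof. intros. replace (sumFin d f - sumFin d g) with (sumFin d f + (-1) * sumFin d g) by ring.
  rewrite <- sumFin_scale, <- sumFin_plus. apply sumFin_ext. intros; ring. Qed.

Lemma dot_add_r {d} (a x y : point d) : dot a (vadd x y) = dot a x + dot a y.
Proof. unfold dot. rewrite <- sumFin_plus. apply sumFin_ext. intros; unfold vadd; ring. Qed.
Lemma dot_sub_r {d} (a x y : point d) : dot a (vsub x y) = dot a x - dot a y.
Proof. unfold dot. rewrite <- sumFin_minus. apply sumFin_ext. intros; unfold vsub; ring. Qed.
Lemma dot_scale_r {d} (a x : point d) c : dot a (vscale c x) = c * dot a x.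
Proof. unfold dot. rewrite <- sumFin_scale. apply sumFin_ext. intros; unfold vscale; ring. Qed.
Lemma dot_scale_l {d} (a x : point d) c : dot (vscale c a) x = c * dot a x.
Proof. unfold dot. rewrite <- sumFin_scale. apply sumFin_ext. intros; unfold vscale; ring. Qed.

Lemma vnorm_lt {d} (e : point d) r : vnorm e < r -> dot e e < r * r.
Proof. unfold vnorm. intros H. pose proof (sumFin_sq_nonneg d e) as H0. fold (dot e e) in H0.
  pose proof (sqrt_pos (dot e e)). rewrite <- (sqrt_sqrt (dot e e)) by lra. nra. Qed.

Lemma bound2 {d} (u e : point d) s : 0 < s -> 2 * Rabs (dot u e) <= s * dot u u + dot e e / s.
Proof. intros Hs.
  assert (Hc : forall x y : R, 2 * (x * y) <= s * (x * x) + (y * y) * / s /\ - (2 * (x*y)) <= s * (x * x) + (y * y) * / s).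
  { intros x y. assert (s * (x * x) + (y * y) * / s - 2 * (x * y) = (s*x - y)*(s*x - y) * / s) by (field; intro; lra).
    assert (s * (x * x) + (y * y) * / s + 2 * (x * y) = (s*x + y)*(s*x + y) * / s) by (field; intro; lra).
    assert (0 <= (s*x - y)*(s*x - y) * / s) by (apply Rmult_le_pos; [apply Rle_0_sqr| left; apply Rinv_0_lt_compat; lra]).
    assert (0 <= (s*x + y)*(s*x + y) * / s) by (apply Rmult_le_pos; [apply Rle_0_sqr| left; apply Rinv_0_lt_compat; lra]).
    split; lra. }
  assert (E : s * dot u u + dot e e / s = sumFin d (fun i => s * (u i * u i) + (e i * e i) * / s)).
  { rewrite sumFin_plus, sumFin_scale.
    rewrite (sumFin_ext d (fun i => e i * e i * / s) (fun i => / s * (e i * e i))) by (intros; ring).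
    rewrite sumFin_scale. unfold dot, Rdiv. ring. }
  rewrite E. unfold Rabs. destruct (Rcase_abs (dot u e)).
  - replace (2 * - dot u e) with (sumFin d (fun i => - (2 * (u i * e i)))).
    apply sumFin_le. intros; apply Hc.
    unfold dot. replace (2 * - sumFin d (fun i => u i * e i)) with ((-2) * sumFin d (fun i => u i * e i)) by ring.
    rewrite <- sumFin_scale. apply sumFin_ext; intros; ring.
  - replace (2 * dot u e) with (sumFin d (fun i => 2 * (u i * e i))).
    apply sumFin_le. intros; apply Hc.
    unfold dot. rewrite <- sumFin_scale. auto.
Qed.

Lemma cont_dot {d} (u : point d) delta : 0 < delta ->
  exists r, 0 < r /\ forall e, vnorm e < r -> 2 * Rabs (dot u e) < delta.
Proof. intros Hd. pose proof (sumFin_sq_nonneg d u) as HA. fold (dot u u) in HA.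
  set (s := delta / (2 * (dot u u + 1))).
  assert (Hs : 0 < s) by (unfold s; apply Rdiv_lt_0_compat; lra).
  assert (HsA : s * dot u u < delta / 2).
  { unfold s. apply (Rmult_lt_reg_r (2 * (dot u u + 1))); [lra|].
    field_simplify; [nra|intro; lra]. }
  exists (Rmin 1 (s * delta / 2)). split.
  { apply Rmin_glb_lt; [lra|]. apply Rdiv_lt_0_compat; [nra|lra]. }
  intros e He. pose proof (bound2 u e s Hs).
  assert (Hr1 : Rmin 1 (s * delta / 2) <= 1) by apply Rmin_l.
  assert (Hr2 : Rmin 1 (s * delta / 2) <= s * delta / 2) by apply Rmin_r.
  pose proof (vnorm_lt e _ He).
  pose proof (sumFin_sq_nonneg d e) as He0. fold (dot e e) in He0.
  assert (dot e e < s * delta / 2).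
  { assert (0 <= vnorm e) by apply sqrt_pos. nra. }
  assert (dot e e / s < delta / 2).
  { apply (Rmult_lt_reg_r s); [lra|]. unfold Rdiv. rewrite Rmult_assoc, Rinv_l; lra. }
  lra.
Qed.

Lemma lsc_dot {d} (a : point d) : forall y c, c < dot a y -> exists r, 0 < r /\ forall y', ball y r y' -> c < dot a y'.
Proof. intros y c Hc. destruct (cont_dot a (dot a y - c)) as [r [Hr Hb]]; [lra|].
  exists r. split; auto. intros y' Hy'. specialize (Hb _ Hy'). rewrite dot_sub_r in Hb.
  unfold Rabs in Hb. destruct (Rcase_abs _); lra. Qed.

Lemma list_min {I : Type} (g : I -> R) : forall (l : list I) i0, List.In i0 l ->
  exists i, List.In i l /\ forall j, List.In j l -> g i <= g j.
Proof. induction l; intros i0 Hi0; [destruct Hi0|].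
  destruct l as [|b l'].
  - exists a. split; [left; auto|]. intros j [Hj|[]]. subst; lra.
  - destruct (IHl b) as [i [Hi Hm]]; [left; auto|].
    destruct (Rle_lt_dec (g a) (g i)).
    + exists a. split; [left; auto|]. intros j [Hj|Hj]; [subst; lra|]. specialize (Hm j Hj). lra.
    + exists i. split; [right; auto|]. intros j [Hj|Hj]; [subst; lra|]. auto.
Qed.

Lemma compact_min {d} (C : pset d) (f : point d -> R) : Defs.compact C -> (exists x : point d, C x) ->
  (forall y c, c < f y -> exists r, 0 < r /\ forall y', ball y r y' -> c < f y') ->
  exists p, C p /\ forall y, C y -> f p <= f y.
Proof. intros Hc [x0 Hx0] Hl. apply NNPP. intro Hno.
  assert (Hex : forall p, C p -> exists y, C y /\ f y < f p).
  { intros p Hp. apply NNPP. intro H. apply Hno. exists p. split; auto. intros y Hy.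
    destruct (Rle_lt_dec (f p) (f y)); auto. exfalso. apply H. exists y; auto. }
  destruct (Hc {w : point d | C w} (fun w y => f (proj1_sig w) < f y)) as [l Hl2].
  - intros [w Hw] y Hy. simpl in *. apply Hl. auto.
  - intros x Hx. destruct (Hex x Hx) as [w [Hw Hfw]]. exists (exist _ w Hw). simpl. auto.
  - destruct (Hl2 x0 Hx0) as [i0 [Hi0 _]].
    destruct (list_min (fun w : {w : point d | C w} => f (proj1_sig w)) l i0 Hi0) as [[p Hp] [Hi Hm]].
    destruct (Hex p Hp) as [y [Hy Hfy]]. destruct (Hl2 y Hy) as [j [Hj Hfj]].
    specialize (Hm j Hj). simpl in *. lra.
Qed.

Lemma separate {d} (K : pset d) w : Defs.compact K -> convex K -> (exists x : point d, K x) -> ~ K w ->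
  exists a, Defs.nonzero a /\ forall y, K y -> dot a y < dot a w.
Proof. intros Hc Hv Hne Hw.
  set (f := fun y => dot (vsub y w) (vsub y w)).
  assert (Hexp : forall y e, f (vadd y e) = f y + 2 * dot (vsub y w) e + dot e e).
  { intros y e. unfold f, dot. rewrite <- sumFin_scale, <- !sumFin_plus. apply sumFin_ext.
    intros; unfold vsub, vadd; ring. }
  destruct (compact_min K f Hc Hne) as [p [Hp Hmin]].
  { intros y c Hcy. destruct (cont_dot (vsub y w) (f y - c)) as [r [Hr Hb]]; [lra|].
    exists r. split; auto. intros y' Hy'. specialize (Hb _ Hy').
    assert (y' = vadd y (vsub y' y)) as E by (apply functional_extensionality; intros; unfold vadd, vsub; ring).
    rewrite E, Hexp. pose proof (sumFin_sq_nonneg d (vsub y' y)). fold (dot (vsub y' y) (vsub y' y)) in H.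
    unfold Rabs in Hb. destruct (Rcase_abs _); lra. }
  set (a := vsub w p).
  assert (Hnz : Defs.nonzero a).
  { apply NNPP. intro H. apply Hw. replace w with p; auto. apply functional_extensionality. intro i.
    destruct (Req_dec (a i) 0) as [E|E]. unfold a, vsub in E. lra. exfalso. apply H. exists i; auto. }
  exists a. split; auto. intros y Hy.
  assert (Hle : dot a y <= dot a p).
  { set (B := dot (vsub p w) (vsub y p)). set (D := dot (vsub y p) (vsub y p)).
    assert (HB : dot a y - dot a p = - B).
    { rewrite <- dot_sub_r. unfold B.
      replace (vsub p w) with (vscale (-1) a) by (apply functional_extensionality; intros; unfold vscale, a, vsub; ring).
      rewrite dot_scale_l. ring. }
    assert (HD : 0 <= D) by apply sumFin_sq_nonneg.
    destruct (Rle_lt_dec 0 B); [lra|]. exfalso.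
    set (t := Rmin 1 (- B / (D + 1))).
    assert (Ht0 : 0 < t) by (apply Rmin_glb_lt; [lra|apply Rdiv_lt_0_compat; lra]).
    assert (Ht1 : t <= 1) by apply Rmin_l.
    assert (Ht2 : t * (D + 1) <= - B).
    { assert (t <= - B / (D + 1)) by apply Rmin_r.
      apply (Rmult_le_compat_r (D+1)) in H; [|lra]. unfold Rdiv in H. rewrite Rmult_assoc, Rinv_l in H; lra. }
    assert (Hyt : K (vadd (vscale (1 - t) p) (vscale t y))) by (apply Hv; auto; lra).
    specialize (Hmin _ Hyt).
    assert (vadd (vscale (1 - t) p) (vscale t y) = vadd p (vscale t (vsub y p))) as E
      by (apply functional_extensionality; intros; unfold vadd, vscale, vsub; ring).
    rewrite E, Hexp in Hmin. rewrite dot_scale_r in Hmin.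
    assert (dot (vscale t (vsub y p)) (vscale t (vsub y p)) = t * t * D) as E2.
    { unfold D. rewrite dot_scale_r. unfold dot. rewrite <- sumFin_scale, <- sumFin_scale. apply sumFin_ext; intros; unfold vscale; ring. }
    rewrite E2 in Hmin. fold B in Hmin. nra. }
  assert (Haa : dot a a = dot a w - dot a p) by (rewrite <- dot_sub_r; reflexivity).
  pose proof (sumFin_sq_pos d a Hnz). fold (dot a a) in H. lra.
Qed.

Lemma conv_incl {d} (S : pset d) x : S x -> conv S x.
Proof. intros H C _ HC. auto. Qed.

Lemma conv_convex {d} (S : pset d) : convex (conv S).
Proof. intros x y t Hx Hy Ht C HC HS. apply HC; [apply Hx|apply Hy|]; auto. Qed.

Lemma dot_homot {d} (a o y : point d) tau : dot a (vadd o (vscale tau y)) = dot a o + tau * dot a y.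
Proof. rewrite dot_add_r, dot_scale_r. auto. Qed.

Theorem theorem4 (d : nat) (K : pset d) (sigma : R)
  (n : nat) (o : nat -> point d) (tau : nat -> R) :
  convex_body K ->
  asymmetry K sigma ->
  (forall i, (i < n)%nat -> 0 < tau i) ->
  non_separable n o tau K ->
  exists t : point d,
    forall x, fam_union n o tau K x ->
      homot t ((sigma + 1) / 2 * sumR n tau) K x.
Proof.
  intros [Hcomp [Hconv _]] [Hs [[q [Hq Hasym]] _]] Htau Hns.
  assert (HKq : K q).
  { destruct Hq as [r [Hr Hb]]. apply Hb. unfold ball, vnorm.
    replace (dot (vsub q q) (vsub q q)) with 0. rewrite sqrt_0; auto.
    unfold dot. rewrite <- (sumFin_zero d). apply sumFin_ext. intros; unfold vsub; ring. }
  destruct n as [|n'].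
  { exists q. intros x [i [Hi _]]. lia. }
  set (n := S n') in *.
  set (Lam := sumR n tau).
  assert (HLam : 0 < Lam).
  { assert (tau 0%nat <= Lam). { apply sumR_ge_term; [intros; left; apply Htau; auto|unfold n; lia]. }
    pose proof (Htau 0%nat ltac:(unfold n; lia)). lra. }
  set (lam := (sigma + 1) / 2 * Lam).
  assert (Hlam : 0 < lam) by (unfold lam; apply Rmult_lt_0_compat; lra).
  set (t := fun m => sumR n (fun i => tau i * (o i m + tau i * q m)) / Lam - lam * q m).
  exists t. intros x [j [Hj [y0 [Hy0 Hx]]]].
  set (w := fun m => (x m - t m) / lam).
  exists w. split.
  2:{ apply functional_extensionality. intro m. unfold vadd, vscale, w. field. lra. }
  destruct (classic (K w)) as [Hw|Hnw]; auto. exfalso.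
  destruct (separate K w Hcomp Hconv (ex_intro _ q HKq) Hnw) as [a [Hnz Hsep]].
  destruct (compact_min K (dot (vscale (-1) a)) Hcomp (ex_intro _ q HKq) (lsc_dot _)) as [ymax [Hymax Hmax]].
  destruct (compact_min K (dot a) Hcomp (ex_intro _ q HKq) (lsc_dot _)) as [ymin [Hymin Hmin]].
  assert (Hmax' : forall y, K y -> dot a y <= dot a ymax).
  { intros y Hy. specialize (Hmax y Hy). rewrite !dot_scale_l in Hmax. lra. }
  set (H := dot a ymax - dot a q). set (G := dot a q - dot a ymin).
  assert (HH : 0 <= H) by (unfold H; pose proof (Hmax' q HKq); lra).
  assert (HG : 0 <= G) by (unfold G; pose proof (Hmin q HKq); lra).
  assert (Has : forall y, K y -> exists y', K y' /\ dot a y - dot a q = - sigma * (dot a y' - dot a q)).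
  { intros y Hy. destruct (Hasym y Hy) as [y' [Hy' E]]. exists y'. split; auto.
    rewrite <- !dot_sub_r, E, dot_scale_r. auto. }
  assert (H1 : H <= sigma * G).
  { destruct (Has ymax Hymax) as [y' [Hy' E]]. pose proof (Hmin y' Hy'). unfold H, G. nra. }
  assert (H2 : G <= sigma * H).
  { destruct (Has ymin Hymin) as [y' [Hy' E]]. pose proof (Hmax' y' Hy'). unfold H, G. nra. }
  set (al := fun i => dot a (o i) + tau i * dot a q).
  assert (Hbody : forall m z, (m < n)%nat -> homot (o m) (tau m) K z ->
     al m - tau m * G <= dot a z <= al m + tau m * H).
  { intros m z Hm [y [Hy Ez]]. subst z. rewrite dot_homot. pose proof (Htau m Hm).
    pose proof (Hmax' y Hy). pose proof (Hmin y Hy). unfold al, H, G. nra. }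
  assert (Hconn : forall c, (exists i, (i<n)%nat /\ al i - tau i * G <= c) -> (exists k, (k<n)%nat /\ c <= al k + tau k * H) ->
      exists m, (m<n)%nat /\ al m - tau m * G <= c <= al m + tau m * H).
  { intros c [i [Hi Hci]] [k [Hk Hck]].
    set (x1 := vadd (o i) (vscale (tau i) ymin)). set (x2 := vadd (o k) (vscale (tau k) ymax)).
    assert (Hx1 : fam_union n o tau K x1) by (exists i; split; auto; exists ymin; auto).
    assert (Hx2 : fam_union n o tau K x2) by (exists k; split; auto; exists ymax; auto).
    assert (E1 : dot a x1 = al i - tau i * G) by (unfold x1; rewrite dot_homot; unfold al, G; ring).
    assert (E2 : dot a x2 = al k + tau k * H) by (unfold x2; rewrite dot_homot; unfold al, H; ring).
    assert (Hxz : exists z, conv (fam_union n o tau K) z /\ dot a z = c).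
    { destruct (Req_dec (dot a x1) (dot a x2)) as [Eq|Ne].
      - exists x1. split; [apply conv_incl; auto|lra].
      - set (s := (c - dot a x1) / (dot a x2 - dot a x1)).
        exists (vadd (vscale (1 - s) x1) (vscale s x2)). split.
        + apply conv_convex; try apply conv_incl; auto. unfold s. split.
          * unfold Rdiv; apply Rmult_le_pos; [lra|left; apply Rinv_0_lt_compat; lra].
          * apply (Rmult_le_reg_r (dot a x2 - dot a x1)); [lra|]. unfold Rdiv. rewrite Rmult_assoc, Rinv_l; lra.
        + rewrite dot_add_r, !dot_scale_r. unfold s. field. intro; lra. }
    destruct (Hns a c Hnz Hxz) as [m [z [Hm [Hz Ez]]]]. exists m. split; auto. rewrite <- Ez. apply Hbody; auto. }
  pose proof (oneD n al tau H G sigma Htau HH HG Hs H1 H2 Hconn j Hj) as HD.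
  set (SA := sumR n (fun i => tau i * al i)).
  assert (Et : dot a t = SA / Lam - lam * dot a q).
  { unfold dot, t. rewrite (sumFin_ext d _ (fun m => / Lam * sumR n (fun i => a m * (tau i * (o i m + tau i * q m))) + (- lam) * (a m * q m))).
    2:{ intros m. rewrite (sumR_scale n (a m) (fun i => tau i * (o i m + tau i * q m))). unfold Rdiv. ring. }
    rewrite sumFin_plus, !sumFin_scale. rewrite (sumFin_sumR d n (fun i m => a m * (tau i * (o i m + tau i * q m)))).
    unfold SA. rewrite (sumR_ext n _ (fun i => tau i * al i)).
    - unfold Rdiv. ring.
    - intros i Hi. unfold al, dot. rewrite <- sumFin_scale, <- sumFin_plus. rewrite <- sumFin_scale. apply sumFin_ext. intros; ring. }
  assert (Ew : dot a w * lam = dot a x - dot a t).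
  { unfold w. rewrite <- dot_sub_r. unfold dot. rewrite Rmult_comm, <- sumFin_scale. apply sumFin_ext. intros m.
    unfold vsub. field. lra. }
  assert (Ex : dot a x <= al j + tau j * H).
  { subst x. rewrite dot_homot. pose proof (Hmax' y0 Hy0). pose proof (Htau j Hj). unfold al, H. nra. }
  pose proof (Hsep ymax Hymax) as Hc.
  assert (HSA : SA / Lam * Lam = SA) by (unfold Rdiv; rewrite Rmult_assoc, Rinv_l; [ring|lra]).
  fold Lam in HD. fold SA in HD.
  assert (HHdef : H = dot a ymax - dot a q) by reflexivity.
  assert (Hlamdef : lam = (sigma + 1) / 2 * Lam) by reflexivity.
  clearbody w t al SA H G lam Lam.
  assert (Hk : (al j + tau j * H) * Lam - SA <= lam * H * Lam) by (rewrite Hlamdef; nra).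
  assert (Hk2 : al j + tau j * H - SA / Lam <= lam * H).
  { apply (Rmult_le_reg_r Lam); auto. nra. }
  assert (dot a w * lam <= lam * dot a ymax) by nra.
  assert (lam * dot a ymax < lam * dot a w) by (apply Rmult_lt_compat_l; auto).
  lra.
Qed.
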